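(* For $d=2$ and $U\in C^\infty(\mathbb{T}^2)$, $Q(U)={}^tP\,D(-U)\,P$, where $P=\begin{pmatrix}0&-1\\1&0\end{pmatrix}$.
   Context: $\mathbb{T}^2=\mathbb{R}^2/\mathbb{Z}^2$. $D(W)$: ${}^tlD(W)l=\inf_{f\in C^\infty(\mathbb{T}^2)}\int|l-\nabla f|^2e^{-2W}dx/\int e^{-2W}$. $\mathcal{F}_{sol}=\{p\in(C^\infty(\mathbb{T}^2))^2:\operatorname{div}p=0,\ \int p\,dx=0\}$; $Q(U)$ is the symmetric matrix with ${}^tlQ(U)l=\inf_{p\in\mathcal{F}_{sol}}\int|l-p|^2e^{2U}dx/\int e^{2U}dx$. *)

(* Defs.v *)
From Stdlib Require Import Reals.
From Coquelicot Require Import Coquelicot.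
From mathcomp Require Import all_boot all_algebra.
From mathcomp Require Import Rstruct.

Set Implicit Arguments.
Unset Strict Implicit.
Unset Printing Implicit Defensive.

Local Open Scope R_scope.

(* Functions on T^2 = R^2/Z^2 are represented as Z^2-periodic functions on R^2. *)
Definition periodic2 (f : R * R -> R) : Prop :=
  forall x y : R, f (x + 1, y) = f (x, y) /\ f (x, y + 1) = f (x, y).

Definition dx (f : R * R -> R) : R * R -> R :=
  fun z => Derive (fun t => f (t, snd z)) (fst z).
Definition dy (f : R * R -> R) : R * R -> R :=
  fun z => Derive (fun t => f (fst z, t)) (snd z).

Fixpoint Ck (k : nat) (f : R * R -> R) : Prop :=
  match k with
  | O => forall z : R * R, continuous f z
  | S k' => (forall z : R * R, continuous f z) /\
            (forall z : R * R, ex_derive (fun t => f (t, snd z)) (fst z)) /\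
            (forall z : R * R, ex_derive (fun t => f (fst z, t)) (snd z)) /\
            Ck k' (dx f) /\ Ck k' (dy f)
  end.

Definition smooth2 (f : R * R -> R) : Prop := forall k : nat, Ck k f.

Definition Cinf_T2 (f : R * R -> R) : Prop := smooth2 f /\ periodic2 f.

Definition intT2 (g : R * R -> R) : R :=
  RInt (fun x => RInt (fun y => g (x, y)) 0 1) 0 1.

Definition D_form (W : R * R -> R) (l1 l2 : R) : R :=
  real (Glb_Rbar (fun r : R => exists f : R * R -> R, Cinf_T2 f /\
     r = intT2 (fun z => ((l1 - dx f z) ^ 2 + (l2 - dy f z) ^ 2) * exp (-2 * W z))
         / intT2 (fun z => exp (-2 * W z)))).

Definition F_sol (p1 p2 : R * R -> R) : Prop :=
  Cinf_T2 p1 /\ Cinf_T2 p2 /\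
  (forall z, dx p1 z + dy p2 z = 0) /\
  intT2 p1 = 0 /\ intT2 p2 = 0.

Definition Q_form (U : R * R -> R) (l1 l2 : R) : R :=
  real (Glb_Rbar (fun r : R => exists p1 p2 : R * R -> R, F_sol p1 p2 /\
     r = intT2 (fun z => ((l1 - p1 z) ^ 2 + (l2 - p2 z) ^ 2) * exp (2 * U z))
         / intT2 (fun z => exp (2 * U z)))).

(* the symmetric 2x2 matrix whose quadratic form is q (polarization) *)
Definition e1 (i : 'I_2) : R := if val i == 0%N then 1 else 0.
Definition e2 (i : 'I_2) : R := if val i == 0%N then 0 else 1.

Definition sym_mx_of_form (q : R -> R -> R) : 'M[R]_2 :=
  \matrix_(i < 2, j < 2)
    ((q (e1 i + e1 j) (e2 i + e2 j) - q (e1 i) (e2 i) - q (e1 j) (e2 j)) / 2).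

Definition Dmx (W : R * R -> R) : 'M[R]_2 := sym_mx_of_form (D_form W).
Definition Qmx (U : R * R -> R) : 'M[R]_2 := sym_mx_of_form (Q_form U).

Definition Pmx : 'M[R]_2 :=
  \matrix_(i < 2, j < 2)
    (if (val i == 0%N) && (val j == 1%N) then -1
     else if (val i == 1%N) && (val j == 0%N) then 1 else 0).

(* Main.v *)
Require Import Defs.
From Stdlib Require Import Reals.
From mathcomp Require Import all_boot all_algebra.
From mathcomp Require Import Rstruct.
From Coquelicot Require Import Coquelicot.
From Stdlib Require Import Lra FunctionalExtensionality.
Local Open Scope R_scope.


Definition cont2 (h : R * R -> R) := forall z, continuous h z.

Lemma cont2_2d (h : R * R -> R) x y :
  continuous h (x, y) -> continuity_2d_pt (fun u v => h (u, v)) x y.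
Proof.
intro H. apply continuity_2d_pt_filterlim.
eapply filterlim_ext; [|exact H]. intros [a b]; reflexivity.
Qed.

Lemma twod_cont (h : R * R -> R) x y :
  continuity_2d_pt (fun u v => h (u, v)) x y -> continuous h (x, y).
Proof.
intro H. apply continuity_2d_pt_filterlim in H.
eapply filterlim_ext; [|exact H]. intros [a b]; reflexivity.
Qed.

Lemma RInt_minusR (f g : R -> R) a b : ex_RInt f a b -> ex_RInt g a b ->
  RInt (fun x => f x - g x) a b = RInt f a b - RInt g a b.
Proof. intros Hf Hg. exact (RInt_minus f g a b Hf Hg). Qed.

Lemma RInt_plusR (f g : R -> R) a b : ex_RInt f a b -> ex_RInt g a b ->
  RInt (fun x => f x + g x) a b = RInt f a b + RInt g a b.
Proof. intros Hf Hg. exact (RInt_plus f g a b Hf Hg). Qed.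

Lemma RInt_scalR (f : R -> R) a b c : ex_RInt f a b ->
  RInt (fun x => c * f x) a b = c * RInt f a b.
Proof. intros Hf. exact (RInt_scal f a b c Hf). Qed.

Lemma RInt_oppR (f : R -> R) a b : ex_RInt f a b ->
  RInt (fun x => - f x) a b = - RInt f a b.
Proof. intros Hf. exact (RInt_opp f a b Hf). Qed.

Lemma RInt_swapR (f : R -> R) a b : ex_RInt f a b -> RInt f b a = - RInt f a b.
Proof. intros Hf. symmetry. exact (opp_RInt_swap f a b Hf). Qed.

Lemma RInt_constR a b c : RInt (fun _ => c) a b = (b - a) * c.
Proof. exact (RInt_const a b c). Qed.

Lemma RInt_pointR (f : R -> R) a : RInt f a a = 0.
Proof. exact (RInt_point a f). Qed.

Lemma ex_RInt_cont (f : R -> R) a b : (forall x, continuous f x) -> ex_RInt f a b.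
Proof. intro H. apply: ex_RInt_continuous. intros; apply H. Qed.

Lemma cont_slice_y (h : R * R -> R) x : cont2 h -> forall t, continuous (fun y => h (x, y)) t.
Proof.
intros H t. apply: (continuous_comp (fun y => (x, y)) h).
- apply: continuous_comp_2. apply continuous_const. apply continuous_id.
  apply: continuous_ext; [|apply continuous_id]. intros [a b]; reflexivity.
- apply H.
Qed.

Lemma cont_slice_x (h : R * R -> R) y : cont2 h -> forall t, continuous (fun x => h (x, y)) t.
Proof.
intros H t. apply: (continuous_comp (fun x => (x, y)) h).
- apply: continuous_comp_2. apply continuous_id. apply continuous_const.
  apply: continuous_ext; [|apply continuous_id]. intros [a b]; reflexivity.
- apply H.
Qed.

Ltac toR := match goal with |- ?a = ?b => change (@eq R a b) end.
Ltac absRInt := repeat match goal with |- context [RInt ?f ?a ?b] =>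
  let r := fresh "r" in pose (r := (RInt f a b : R)); change (RInt f a b) with r; clearbody r end.
Ltac rring := toR; absRInt; ring.



Lemma param_cont_le (h : R * R -> R) a b x0 : a <= b -> cont2 h ->
  continuous (fun x => RInt (fun y => h (x, y)) a b) x0.
Proof.
intros Hab H.
apply continuity_pt_filterlim, continuity_pt_locally. intro eps.
have Hc : forall t, a <= t <= b -> continuity_2d_pt (fun u v => h (u, v)) x0 t.
{ intros t _. apply cont2_2d, H. }
have Hp : 0 < eps / (b - a + 1).
{ apply Rdiv_lt_0_compat. apply cond_pos. lra. }
destruct (uniform_continuity_2d_1d' _ a b x0 Hc (mkposreal _ Hp)) as [d Hd].
exists d. intros y Hy. change (Rabs (y - x0) < d) in Hy.
rewrite -RInt_minusR; try (apply ex_RInt_cont; intro; apply cont_slice_y, H).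
apply Rle_lt_trans with ((b - a) * (eps / (b - a + 1))).
- apply abs_RInt_le_const. lra.
  apply: ex_RInt_minus; apply ex_RInt_cont; intro; apply cont_slice_y, H.
  intros t Ht. apply Rlt_le.
  have := Hd t x0 t y Ht _ Ht _ _. simpl. apply.
  + have := cond_pos d. split; lra.
  + apply Rabs_lt_between' in Hy. lra.
  + rewrite Rminus_diag Rabs_R0. apply cond_pos.
- have Hpos := cond_pos eps.
  apply Rlt_le_trans with ((b - a + 1) * (eps / (b - a + 1))).
  + apply Rmult_lt_compat_r. exact Hp. lra.
  + right. field. lra.
Qed.

Lemma param_cont (h : R * R -> R) a b x0 : cont2 h ->
  continuous (fun x => RInt (fun y => h (x, y)) a b) x0.
Proof.
intros H. destruct (Rle_dec a b) as [Hab|Hab].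
- now apply param_cont_le.
- apply (continuous_ext (fun x => - RInt (fun y => h (x, y)) b a)).
  + intro x. rewrite (RInt_swapR _ b a). lra.
    apply ex_RInt_cont; intro; apply cont_slice_y, H.
  + apply: (continuous_opp (fun x => RInt (fun y => h (x, y)) b a)). apply param_cont_le. lra. exact H.
Qed.



Lemma deriv0_const (phi : R -> R) : (forall t, is_derive phi t 0) -> forall a b, phi a = phi b.
Proof.
intros H a b.
destruct (MVT_gen phi a b (fun _ => 0)) as [c [_ Hc]].
- intros; apply H.
- intros x _. apply continuity_pt_filterlim. apply: ex_derive_continuous.
  exists 0. apply H.
- lra.
Qed.

Lemma same_deriv (phi psi d : R -> R) :
  (forall t, is_derive phi t (d t)) -> (forall t, is_derive psi t (d t)) ->
  forall a b, phi a - psi a = phi b - psi b.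
Proof.
intros H1 H2 a b. apply (deriv0_const (fun t => phi t - psi t)).
intro t. have := is_derive_minus phi psi t _ _ (H1 t) (H2 t).
rewrite /minus /plus /opp /=. intro H.
replace 0 with (d t + - d t) by (simpl; ring). exact H.
Qed.



Lemma cont2_swap (h : R * R -> R) : cont2 h -> cont2 (fun z => h (snd z, fst z)).
Proof.
intros H [a b]. apply: (continuous_comp (fun z : R * R => (snd z, fst z)) h).
- apply: continuous_comp_2. apply continuous_snd. apply continuous_fst.
  apply: continuous_ext; [|apply continuous_id]. intros [u v]; reflexivity.
- apply H.
Qed.

Lemma FTC_deriv (f : R -> R) a s : (forall x, continuous f x) ->
  is_derive (fun b => RInt f a b) s (f s).
Proof.
intro H. apply: is_derive_RInt.
- apply filter_forall. intro b. apply RInt_correct, ex_RInt_cont, H.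
- apply H.
Qed.

Lemma fubini01 (h : R * R -> R) : cont2 h ->
  RInt (fun y => RInt (fun x => h (x, y)) 0 1) 0 1 = intT2 h.
Proof.
intro H. rewrite /intT2.
set F := fun s => RInt (fun y => RInt (fun x => h (x, y)) 0 s) 0 1.
set G := fun s => RInt (fun x => RInt (fun y => h (x, y)) 0 1) 0 s.
have HG : forall s, is_derive G s (RInt (fun y => h (s, y)) 0 1).
{ intro s. apply (FTC_deriv (fun x => RInt (fun y => h (x, y)) 0 1)).
  intro; apply param_cont, H. }
have HF : forall s, is_derive F s (RInt (fun y => h (s, y)) 0 1).
{ intro s.
  have E : RInt (fun y => h (s, y)) 0 1 =
           RInt (fun t => Derive (fun u => RInt (fun x => h (x, t)) 0 u) s) 0 1.
  { apply RInt_ext. intros t _. symmetry. apply is_derive_unique.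
    apply (FTC_deriv (fun x => h (x, t))). apply cont_slice_x, H. }
  rewrite E. apply: (is_derive_RInt_param (fun u t => RInt (fun x => h (x, t)) 0 u) 0 1 s).
  - apply filter_forall. intros u t _. exists (h (u, t)).
    apply (FTC_deriv (fun x => h (x, t))). apply cont_slice_x, H.
  - intros t _. apply (continuity_2d_pt_ext (fun u v => h (u, v))).
    + intros u v. symmetry. apply is_derive_unique.
      apply (FTC_deriv (fun x => h (x, v))). apply cont_slice_x, H.
    + apply cont2_2d, H.
  - apply filter_forall. intro u. apply ex_RInt_cont. intro t.
    have := param_cont (fun z => h (snd z, fst z)) 0 u t (cont2_swap h H).
    simpl. exact. }
have := same_deriv F G _ HF HG 0 1.
have -> : F 0 = 0.
{ rewrite /F. have -> : RInt (fun y => RInt (fun x => h (x, y)) 0 0) 0 1 = RInt (fun _ => 0) 0 1.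
  { apply RInt_ext. intros; apply RInt_pointR. }
  rewrite RInt_constR. apply Rmult_0_r. }
have -> : G 0 = 0 by rewrite /G RInt_pointR.
intro E. rewrite /F /G in E. lra.
Qed.



Lemma cont2_plus f g : cont2 f -> cont2 g -> cont2 (fun z => f z + g z).
Proof. intros Hf Hg z. apply: (continuous_plus f g). apply Hf. apply Hg. Qed.
Lemma cont2_mult f g : cont2 f -> cont2 g -> cont2 (fun z => f z * g z).
Proof. intros Hf Hg z. apply: (continuous_mult f g). apply Hf. apply Hg. Qed.
Lemma cont2_opp f : cont2 f -> cont2 (fun z => - f z).
Proof. intros Hf z. apply: (continuous_opp f). apply Hf. Qed.
Lemma cont2_const c : cont2 (fun _ => c).
Proof. intros z. apply continuous_const. Qed.
Lemma cont2_minus f g : cont2 f -> cont2 g -> cont2 (fun z => f z - g z).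
Proof. intros Hf Hg. apply cont2_plus => //. by apply cont2_opp. Qed.
Lemma cont2_exp f : cont2 f -> cont2 (fun z => exp (f z)).
Proof.
intros Hf z. apply: (continuous_comp f exp). apply Hf.
apply: ex_derive_continuous. exists (exp (f z)). apply is_derive_Reals, derivable_pt_lim_exp.
Qed.
Lemma cont2_pow2 f : cont2 f -> cont2 (fun z => f z ^ 2).
Proof.
intros Hf z. apply (continuous_ext (fun z => f z * f z)). intro; simpl; ring.
by apply cont2_mult.
Qed.

Lemma intT2_ext f g : (forall z, f z = g z) -> intT2 f = intT2 g.
Proof. intro H. by rewrite (functional_extensionality f g H). Qed.

Lemma ex_inner (h : R * R -> R) x : cont2 h -> ex_RInt (fun y => h (x, y)) 0 1.
Proof. intro H. apply ex_RInt_cont, cont_slice_y, H. Qed.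
Lemma ex_outer (h : R * R -> R) : cont2 h -> ex_RInt (fun x => RInt (fun y => h (x, y)) 0 1) 0 1.
Proof. intro H. apply ex_RInt_cont. intro; apply param_cont, H. Qed.

Lemma intT2_plus f g : cont2 f -> cont2 g -> intT2 (fun z => f z + g z) = intT2 f + intT2 g.
Proof.
intros Hf Hg. rewrite /intT2.
rewrite (RInt_ext _ (fun x => RInt (fun y => f (x, y)) 0 1 + RInt (fun y => g (x, y)) 0 1)).
- apply RInt_plusR; by apply ex_outer.
- intros x _. apply (RInt_plusR (fun y => f (x, y)) (fun y => g (x, y))); by apply ex_inner.
Qed.

Lemma intT2_scal f c : cont2 f -> intT2 (fun z => c * f z) = c * intT2 f.
Proof.
intros Hf. rewrite /intT2.
rewrite (RInt_ext _ (fun x => c * RInt (fun y => f (x, y)) 0 1)).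
- apply RInt_scalR; by apply ex_outer.
- intros x _. apply (RInt_scalR (fun y => f (x, y))); by apply ex_inner.
Qed.

Lemma intT2_ge0 f : cont2 f -> (forall z, 0 <= f z) -> 0 <= intT2 f.
Proof.
intros Hf Hp. rewrite /intT2. apply RInt_ge_0. lra. by apply ex_outer.
intros x _. apply RInt_ge_0. lra. by apply ex_inner. intros; apply Hp.
Qed.



Lemma Ck_cont k f : Ck k f -> cont2 f.
Proof. destruct k; simpl; [auto| intros [H _]; exact H]. Qed.

Lemma Ck_lin k : forall f g a b, Ck k f -> Ck k g -> Ck k (fun z => a * f z + b * g z).
Proof.
induction k as [|k IH]; intros f g a b Hf Hg.
- simpl in *. apply cont2_plus; apply cont2_mult; auto using cont2_const.
- destruct Hf as [cf [xf [yf [Df Ef]]]]. destruct Hg as [cg [xg [yg [Dg Eg]]]].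
  split; [|split; [|split; [|split]]].
  + apply cont2_plus; apply cont2_mult; auto using cont2_const.
  + intro z. apply: ex_derive_plus; apply: ex_derive_scal; auto.
  + intro z. apply: ex_derive_plus; apply: ex_derive_scal; auto.
  + have -> : dx (fun z => a * f z + b * g z) = (fun z => a * dx f z + b * dx g z).
    { apply functional_extensionality. intro z. rewrite /dx.
      rewrite (Derive_plus (fun t => a * f (t, snd z)) (fun t => b * g (t, snd z))).
      by rewrite !Derive_scal.
      apply: ex_derive_scal; auto. apply: ex_derive_scal; auto. }
    by apply IH.
  + have -> : dy (fun z => a * f z + b * g z) = (fun z => a * dy f z + b * dy g z).
    { apply functional_extensionality. intro z. rewrite /dy.
      rewrite (Derive_plus (fun t => a * f (fst z, t)) (fun t => b * g (fst z, t))).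
      by rewrite !Derive_scal.
      apply: ex_derive_scal; auto. apply: ex_derive_scal; auto. }
    by apply IH.
Qed.

Lemma Ck_ext k f g : (forall z, f z = g z) -> Ck k f -> Ck k g.
Proof. intros H. by rewrite (functional_extensionality f g H). Qed.

Lemma smooth_lin f g a b : smooth2 f -> smooth2 g -> smooth2 (fun z => a * f z + b * g z).
Proof. intros Hf Hg k. by apply Ck_lin. Qed.

Lemma smooth_opp f : smooth2 f -> smooth2 (fun z => - f z).
Proof.
intros Hf k. apply (Ck_ext k (fun z => -1 * f z + 0 * f z)). intro; ring.
by apply Ck_lin.
Qed.

Lemma smooth_dx f : smooth2 f -> smooth2 (dx f).
Proof. intros H k. exact (proj1 (proj2 (proj2 (proj2 (H (S k)))))). Qed.
Lemma smooth_dy f : smooth2 f -> smooth2 (dy f).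
Proof. intros H k. exact (proj2 (proj2 (proj2 (proj2 (H (S k)))))). Qed.
Lemma smooth_cont f : smooth2 f -> cont2 f.
Proof. intros H. exact (Ck_cont 0 f (H O)). Qed.
Lemma smooth_exdx f : smooth2 f -> forall z, ex_derive (fun t => f (t, snd z)) (fst z).
Proof. intros H. exact (proj1 (proj2 (H 1%nat))). Qed.
Lemma smooth_exdy f : smooth2 f -> forall z, ex_derive (fun t => f (fst z, t)) (snd z).
Proof. intros H. exact (proj1 (proj2 (proj2 (H 1%nat)))). Qed.



Lemma Derive_shift (g : R -> R) x c : Derive (fun t => g (t + c)) x = Derive g (x + c).
Proof.
rewrite /Derive. f_equal. apply Lim_ext. intro h.
by replace (x + c + h) with (x + h + c) by ring.
Qed.

Lemma periodic_dx f : periodic2 f -> periodic2 (dx f).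
Proof.
intros H x y. rewrite /dx /=. split.
- rewrite -Derive_shift. apply Derive_ext. intro t. apply H.
- apply Derive_ext. intro t. apply H.
Qed.

Lemma periodic_dy f : periodic2 f -> periodic2 (dy f).
Proof.
intros H x y. rewrite /dy /=. split.
- apply Derive_ext. intro t. apply H.
- rewrite -Derive_shift. apply Derive_ext. intro t. apply H.
Qed.

Lemma periodic_opp f : periodic2 f -> periodic2 (fun z => - f z).
Proof. intros H x y. by rewrite (proj1 (H x y)) (proj2 (H x y)). Qed.

Lemma schwarz_f f : smooth2 f -> forall z,
  Derive (fun t => dy f (t, snd z)) (fst z) = dy (dx f) z.
Proof.
intros H [x y]. rewrite /dy /dx /=.
apply (Schwarz (fun u v => f (u, v)) x y).
- apply locally_2d_forall. intros u v. split; [|split; [|split]].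
  + exact (smooth_exdx f H (u, v)).
  + exact (smooth_exdy f H (u, v)).
  + exact (smooth_exdx (dy f) (smooth_dy f H) (u, v)).
  + exact (smooth_exdy (dx f) (smooth_dx f H) (u, v)).
- apply (continuity_2d_pt_ext (fun u v => dx (dy f) (u, v))). reflexivity.
  apply cont2_2d. apply smooth_cont, smooth_dx, smooth_dy, H.
- apply (continuity_2d_pt_ext (fun u v => dy (dx f) (u, v))). reflexivity.
  apply cont2_2d. apply smooth_cont, smooth_dy, smooth_dx, H.
Qed.

Lemma intT2_dy f : Cinf_T2 f -> intT2 (dy f) = 0.
Proof.
intros [Hs Hp]. rewrite /intT2.
rewrite (RInt_ext _ (fun _ => 0)). rewrite RInt_constR. apply Rmult_0_r.
intros x _.
have -> : RInt (fun y => dy f (x, y)) 0 1 = RInt (Derive (fun t => f (x, t))) 0 1 by [].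
rewrite RInt_Derive.
- rewrite -{1}(Rplus_0_l 1) (proj2 (Hp x 0)). rring.
- intros t _. exact (smooth_exdy f Hs (x, t)).
- intros t _. apply (cont_slice_y (dy f) x). apply smooth_cont, smooth_dy, Hs.
Qed.

Lemma intT2_dx f : Cinf_T2 f -> intT2 (dx f) = 0.
Proof.
intros [Hs Hp]. rewrite /intT2.
set K := fun x => RInt (fun y => f (x, y)) 0 1.
have HK : forall x, is_derive K x (RInt (fun y => dx f (x, y)) 0 1).
{ intro x. apply: (is_derive_RInt_param (fun u t => f (u, t)) 0 1 x).
  - apply filter_forall. intros u t _. exact (smooth_exdx f Hs (u, t)).
  - intros t _. apply (continuity_2d_pt_ext (fun u v => dx f (u, v))). reflexivity.
    apply cont2_2d. apply smooth_cont, smooth_dx, Hs.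
  - apply filter_forall. intro u. apply ex_inner, smooth_cont, Hs. }
rewrite (RInt_ext _ (Derive K)).
- rewrite RInt_Derive.
  + rewrite /K. rewrite (RInt_ext (fun y => f (1, y)) (fun y => f (0, y))).
    ring. intros y _. rewrite -{1}(Rplus_0_l 1). apply (proj1 (Hp 0 y)).
  + intros x _. exists (RInt (fun y => dx f (x, y)) 0 1). apply HK.
  + intros x _. apply (continuous_ext (fun x => RInt (fun y => dx f (x, y)) 0 1)).
    intro t. symmetry. apply is_derive_unique, HK.
    apply param_cont, smooth_cont, smooth_dx, Hs.
- intros x _. symmetry. apply is_derive_unique, HK.
Qed.

Lemma grad_Fsol f : Cinf_T2 f -> F_sol (fun z => - dy f z) (dx f).
Proof.
intros Hf. have Hf' := Hf. destruct Hf' as [Hs Hp].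
split; [|split; [|split; [|split]]].
- split. apply smooth_opp, smooth_dy, Hs. apply periodic_opp, periodic_dy, Hp.
- split. apply smooth_dx, Hs. apply periodic_dx, Hp.
- intro z. rewrite /dx. rewrite Derive_opp.
  have := schwarz_f f Hs z. rewrite /dx. intros ->. ring.
- rewrite (intT2_ext _ (fun z => -1 * dy f z + 0 * dy f z)).
  rewrite intT2_plus. rewrite !intT2_scal. rewrite intT2_dy //. ring.
  all: try (apply smooth_cont, smooth_dy, Hs).
  all: try (apply cont2_mult; [apply cont2_const| apply smooth_cont, smooth_dy, Hs]).
  intro; ring.
- by apply intT2_dx.
Qed.



Lemma C1_cont (h a : R * R -> R) :
  (forall x y, is_derive (fun t => h (t, y)) x (a (x, y))) -> cont2 a ->
  (forall x y, ex_derive (fun t => h (x, t)) y) -> cont2 h.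
Proof.
intros Hx Ha Hy [x0 y0]. apply twod_cont. intro eps.
have Hpe := cond_pos eps.
destruct (cont2_2d a x0 y0 (Ha (x0, y0)) (mkposreal 1 Rlt_0_1)) as [d1 Hd1].
have Hcy : continuity_pt (fun t => h (x0, t)) y0.
{ apply continuity_pt_filterlim. apply: ex_derive_continuous. apply Hy. }
have Hpe2 : 0 < eps / 2 by lra.
destruct ((proj1 (continuity_pt_locally _ _) Hcy) (mkposreal _ Hpe2)) as [d2 Hd2].
set M := Rabs (a (x0, y0)) + 1.
have HM : 0 < M by (have := Rabs_pos (a (x0, y0)); rewrite /M; lra).
have Hd3 : 0 < eps / (2 * M) by (apply Rdiv_lt_0_compat; lra).
set d := Rmin d1 (Rmin d2 (eps / (2 * M))).
have Hd : 0 < d by (apply Rmin_pos; [apply cond_pos| apply Rmin_pos; [apply cond_pos|lra]]).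
exists (mkposreal d Hd). intros u v Hu Hv. simpl in Hu, Hv.
have Hdd1 : d <= d1 by apply Rmin_l.
have Hdd2 : d <= d2 by (rewrite /d; eapply Rle_trans; [apply Rmin_r| apply Rmin_l]).
have Hdd3 : d <= eps / (2 * M) by (rewrite /d; eapply Rle_trans; [apply Rmin_r| apply Rmin_r]).
destruct (MVT_gen (fun t => h (t, v)) x0 u (fun t => a (t, v))) as [c [Hc Hmvt]].
- intros; apply Hx.
- intros t _. apply continuity_pt_filterlim. apply: ex_derive_continuous.
  exists (a (t, v)). apply Hx.
- have Hcx : Rabs (c - x0) <= Rabs (u - x0).
  { apply Rabs_le_between_min_max. by rewrite Rmin_comm Rmax_comm. }
  have Hac : Rabs (a (c, v) - a (x0, y0)) < 1 by (apply Hd1; lra).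
  have Hac' : Rabs (a (c, v)) <= M.
  { have := Rabs_triang_inv (a (c, v)) (a (x0, y0)). rewrite /M. lra. }
  have E1 : Rabs (h (u, v) - h (x0, v)) <= M * Rabs (u - x0).
  { rewrite /= in Hmvt. rewrite Hmvt Rabs_mult. apply Rmult_le_compat_r.
    apply Rabs_pos. exact Hac'. }
  have E2 : M * Rabs (u - x0) < eps / 2.
  { apply Rlt_le_trans with (M * (eps / (2 * M))).
    apply Rmult_lt_compat_l; lra. right; field; lra. }
  have E3 : Rabs (h (x0, v) - h (x0, y0)) < eps / 2.
  { apply (Hd2 v). change (Rabs (v - y0) < d2). lra. }
  simpl in E3 |- *.
  apply Rle_lt_trans with (Rabs (h (u, v) - h (x0, v)) + Rabs (h (x0, v) - h (x0, y0))).
  2:{ have fin : forall A B C : R, A <= C -> C < eps / 2 -> B < eps / 2 -> A + B < eps by (intros; lra). exact (fin _ _ _ E1 E2 E3). }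
  change (Rabs (h (u, v) - h (x0, y0)) <= Rabs (h (u, v) - h (x0, v)) + Rabs (h (x0, v) - h (x0, y0))).
  replace (h (u, v) - h (x0, y0)) with ((h (u, v) - h (x0, v)) + (h (x0, v) - h (x0, y0))) by ring.
  apply Rabs_triang.
Qed.

Lemma const2 (h : R * R -> R) :
  (forall x y, is_derive (fun t => h (t, y)) x 0) ->
  (forall x y, is_derive (fun t => h (x, t)) y 0) ->
  forall x y, h (x, y) = h (0, 0).
Proof.
intros Hx Hy x y.
rewrite (deriv0_const (fun t => h (t, y)) (fun t => Hx t y) x 0).
exact (deriv0_const (fun t => h (0, t)) (fun t => Hy 0 t) y 0).
Qed.



Lemma is_derive_eq (f : R -> R) x a b : is_derive f x a -> a = b -> is_derive f x b.
Proof. by intros H <-. Qed.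

Lemma is_derive_minusR (f g : R -> R) x a b :
  is_derive f x a -> is_derive g x b -> is_derive (fun t => f t - g t) x (a - b).
Proof. intros Ha Hb. exact (is_derive_minus f g x a b Ha Hb). Qed.

Lemma is_derive_constR (c x : R) : is_derive (fun _ : R => c) x 0.
Proof. exact (is_derive_const c x). Qed.

Lemma is_derive_shift1 (f : R -> R) x a : is_derive f (x + 1) a -> is_derive (fun t => f (t + 1)) x a.
Proof.
intro H. have H1 : is_derive (fun t : R => t + 1) x 1.
{ have := is_derive_plus (fun t : R => t) (fun _ => 1) x 1 0 (is_derive_id x) (is_derive_constR 1 x).
  rewrite /plus /=. by rewrite Rplus_0_r. }
have := is_derive_comp f (fun t => t + 1) x a 1 H H1. rewrite /scal /= /mult /=.
by rewrite Rmult_1_l.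
Qed.

Definition pot (p1 p2 : R * R -> R) (z : R * R) : R :=
  RInt (fun t => p2 (t, snd z)) 0 (fst z) - RInt (fun s => p1 (0, s)) 0 (snd z).

Lemma pot_dx p1 p2 : F_sol p1 p2 -> forall x y : R,
  is_derive (fun t => pot p1 p2 (t, y)) x (p2 (x, y)).
Proof.
intros [[H1 _] [[H2 _] _]] x y. rewrite /pot /=.
eapply is_derive_eq. apply is_derive_minusR.
- apply (FTC_deriv (fun t => p2 (t, y))). apply cont_slice_x, smooth_cont, H2.
- apply is_derive_constR.
- rring.
Qed.

Lemma pot_dy p1 p2 : F_sol p1 p2 -> forall x y : R,
  is_derive (fun t => pot p1 p2 (x, t)) y (- p1 (x, y)).
Proof.
intros [[H1 _] [[H2 _] [Hdiv _]]] x y. rewrite /pot /=.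
apply (is_derive_eq _ _ (- (p1 (x, y) - p1 (0, y)) - p1 (0, y))); last by rring.
apply is_derive_minusR.
- have E : - (p1 (x, y) - p1 (0, y)) = RInt (fun u => Derive (fun t => p2 (u, t)) y) 0 x.
  { rewrite (RInt_ext _ (fun u => - Derive (fun t => p1 (t, y)) u)).
    - rewrite RInt_oppR. rewrite RInt_Derive. reflexivity.
      + intros t _. exact (smooth_exdx p1 H1 (t, y)).
      + intros t _. apply (cont_slice_x (dx p1) y). apply smooth_cont, smooth_dx, H1.
      + apply ex_RInt_cont. intro t. apply (cont_slice_x (dx p1) y). apply smooth_cont, smooth_dx, H1.
    - intros u _. have := Hdiv (u, y). rewrite /dx /dy /=. lra. }
  rewrite E.
  apply: (is_derive_RInt_param (fun t u => p2 (u, t)) 0 x y).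
  + apply filter_forall. intros t u _. exact (smooth_exdy p2 H2 (u, t)).
  + intros t _. apply (continuity_2d_pt_ext (fun a b => dy p2 (b, a))). reflexivity.
    apply (cont2_2d (fun z => dy p2 (snd z, fst z))).
    apply cont2_swap, smooth_cont, smooth_dy, H2.
  + apply filter_forall. intro t. apply ex_RInt_cont. apply cont_slice_x, smooth_cont, H2.
- apply (FTC_deriv (fun s => p1 (0, s))). apply cont_slice_y, smooth_cont, H1.
Qed.



Lemma pot_dx_eq p1 p2 : F_sol p1 p2 -> dx (pot p1 p2) = p2.
Proof.
intro H. apply functional_extensionality. intros [x y]. rewrite /dx /=.
by apply is_derive_unique, pot_dx.
Qed.

Lemma pot_dy_eq p1 p2 : F_sol p1 p2 -> dy (pot p1 p2) = (fun z => - p1 z).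
Proof.
intro H. apply functional_extensionality. intros [x y]. rewrite /dy /=.
by apply is_derive_unique, pot_dy.
Qed.

Lemma pot_smooth p1 p2 : F_sol p1 p2 -> smooth2 (pot p1 p2).
Proof.
intros H. have H' := H. destruct H' as [[S1 _] [[S2 _] _]].
have Hc : cont2 (pot p1 p2).
{ apply (C1_cont _ p2). exact (pot_dx p1 p2 H). apply smooth_cont, S2.
  intros x y. eexists. exact (pot_dy p1 p2 H x y). }
intro k. destruct k as [|k]. exact Hc.
split; [exact Hc|split; [|split; [|split]]].
- intros [x y]. eexists. exact (pot_dx p1 p2 H x y).
- intros [x y]. eexists. exact (pot_dy p1 p2 H x y).
- rewrite (pot_dx_eq p1 p2 H). exact (S2 k).
- rewrite (pot_dy_eq p1 p2 H). exact (smooth_opp p1 S1 k).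
Qed.

Lemma pot_periodic p1 p2 : F_sol p1 p2 -> periodic2 (pot p1 p2).
Proof.
intros H. have H' := H. destruct H' as [[S1 P1] [[S2 P2] [_ [I1 I2]]]].
have C1 := smooth_cont _ S1. have C2 := smooth_cont _ S2.
set g := pot p1 p2.
set h := fun z : R * R => g (fst z + 1, snd z) - g z.
have Hh := const2 h.
have Hh1 : forall x y : R, h (x, y) = h (0, 0).
{ apply Hh.
  - intros x y. rewrite /h /=. eapply is_derive_eq.
    apply is_derive_minusR. apply (is_derive_shift1 (fun t => g (t, y))). apply pot_dx, H.
    apply pot_dx, H. rewrite (proj1 (P2 x y)). rring.
  - intros x y. rewrite /h /=. eapply is_derive_eq.
    apply is_derive_minusR. apply pot_dy, H. apply pot_dy, H.
    rewrite (proj1 (P1 x y)). rring. }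
have Hh0 : forall y : R, RInt (fun t => p2 (t, y)) 0 1 = h (0, 0).
{ intro y. rewrite -(Hh1 0 y) /h /g /pot /= Rplus_0_l RInt_pointR. rring. }
have Hh00 : h (0, 0) = 0.
{ have : intT2 p2 = h (0, 0).
  { rewrite -(fubini01 p2 C2) (RInt_ext _ (fun _ => h (0, 0))).
    rewrite RInt_constR. rring. intros y _. apply Hh0. }
  rewrite I2. lra. }
set k := fun z : R * R => g (fst z, snd z + 1) - g z.
have Hk1 : forall x y : R, k (x, y) = k (0, 0).
{ apply const2.
  - intros x y. rewrite /k /=. eapply is_derive_eq.
    apply is_derive_minusR. apply pot_dx, H. apply pot_dx, H.
    rewrite (proj2 (P2 x y)). rring.
  - intros x y. rewrite /k /=. eapply is_derive_eq.
    apply is_derive_minusR. apply (is_derive_shift1 (fun t => g (x, t))). apply pot_dy, H.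
    apply pot_dy, H. rewrite (proj2 (P1 x y)). rring. }
have Hk0 : forall x : R, RInt (fun t => p1 (x, t)) 0 1 = - k (0, 0).
{ intro x. rewrite -(Hk1 x 0) /k /=. rewrite Rplus_0_l.
  have -> : g (x, 1) - g (x, 0) = RInt (Derive (fun t => g (x, t))) 0 1.
  { rewrite RInt_Derive //.
    - intros t _. eexists. exact (pot_dy p1 p2 H x t).
    - intros t _. apply (continuous_ext (fun t => - p1 (x, t))).
      intro u. symmetry. apply is_derive_unique, pot_dy, H.
      apply (cont_slice_y (fun z => - p1 z)). apply cont2_opp, C1. }
  rewrite (RInt_ext (Derive (fun t => g (x, t))) (fun t => - p1 (x, t))).
  rewrite RInt_oppR. rring. apply ex_inner, C1.
  intros t _. apply is_derive_unique, pot_dy, H. }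
have Hk00 : k (0, 0) = 0.
{ have : intT2 p1 = - k (0, 0).
  { rewrite /intT2 (RInt_ext _ (fun _ => - k (0, 0))). rewrite RInt_constR. rring.
    intros x _. apply Hk0. }
  rewrite I1. lra. }
intros x y. split.
- have := Hh1 x y. rewrite Hh00 /h /=. lra.
- have := Hk1 x y. rewrite Hk00 /k /=. lra.
Qed.

Lemma potential p1 p2 : F_sol p1 p2 ->
  exists g, Cinf_T2 g /\ dx g = p2 /\ dy g = (fun z => - p1 z).
Proof.
intro H. exists (pot p1 p2). split; [split|split].
apply pot_smooth, H. apply pot_periodic, H. apply pot_dx_eq, H. apply pot_dy_eq, H.
Qed.



Lemma QD U : Cinf_T2 U -> forall l1 l2 : R,
  Q_form U l1 l2 = D_form (fun z => - U z) l2 (- l1).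
Proof.
intros HU l1 l2. rewrite /Q_form /D_form. f_equal. apply Glb_Rbar_eqset. intro r. split.
- intros [p1 [p2 [Hp ->]]]. destruct (potential p1 p2 Hp) as [g [Hg [Hx Hy]]].
  exists g. split; first exact Hg. rewrite Hx Hy. f_equal; apply intT2_ext; intro z.
  + replace (-2 * - U z) with (2 * U z) by ring. ring.
  + replace (-2 * - U z) with (2 * U z) by ring. ring.
- intros [f [Hf ->]]. exists (fun z => - dy f z), (dx f). split; first by apply grad_Fsol.
  f_equal; apply intT2_ext; intro z.
  + replace (-2 * - U z) with (2 * U z) by ring. ring.
  + replace (-2 * - U z) with (2 * U z) by ring. ring.
Qed.

Lemma glb_props (S : R -> Prop) r0 : (forall r, S r -> 0 <= r) -> S r0 ->
  real (Glb_Rbar S) <= r0 /\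
  (forall m, (forall r, S r -> m <= r) -> m <= real (Glb_Rbar S)).
Proof.
intros Hnn Hr0. destruct (Glb_Rbar_correct S) as [Hlb Hgr].
have H0 : Rbar_le 0 (Glb_Rbar S).
{ apply Hgr. intros x Hx. apply Hnn, Hx. }
have H1 := Hlb r0 Hr0.
destruct (Glb_Rbar S) as [l| |] eqn:El; simpl in H0, H1 |- *; try contradiction.
split; first exact H1. intros m Hm.
have := Hgr m. simpl. apply. intros x Hx. apply Hm, Hx.
Qed.



Definition numf (W : R * R -> R) (a b : R) (f : R * R -> R) :=
  fun z => ((a - dx f z) ^ 2 + (b - dy f z) ^ 2) * exp (-2 * W z).
Definition Nf (W : R * R -> R) (a b : R) (f : R * R -> R) :=
  intT2 (numf W a b f) / intT2 (fun z => exp (-2 * W z)).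

Lemma D_form_eq W a b : D_form W a b =
  real (Glb_Rbar (fun r => exists f, Cinf_T2 f /\ r = Nf W a b f)).
Proof. reflexivity. Qed.

Lemma cont_num W a b f : cont2 W -> Cinf_T2 f -> cont2 (numf W a b f).
Proof.
intros HW [Hf _]. rewrite /numf. apply cont2_mult.
- apply cont2_plus; apply cont2_pow2; apply cont2_minus; try apply cont2_const.
  apply smooth_cont, smooth_dx, Hf. apply smooth_cont, smooth_dy, Hf.
- apply cont2_exp, cont2_mult. apply cont2_const. exact HW.
Qed.

Lemma cont_den W : cont2 W -> cont2 (fun z => exp (-2 * W z)).
Proof. intros HW. apply cont2_exp, cont2_mult. apply cont2_const. exact HW. Qed.

Lemma Nf_nonneg W a b f : cont2 W -> Cinf_T2 f -> 0 <= Nf W a b f.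
Proof.
intros HW Hf. rewrite /Nf.
have H1 : 0 <= intT2 (numf W a b f).
{ apply intT2_ge0. by apply cont_num. intro z. rewrite /numf.
  apply Rmult_le_pos. have := pow2_ge_0 (a - dx f z). have := pow2_ge_0 (b - dy f z). lra.
  apply Rlt_le, exp_pos. }
have H2 : 0 <= intT2 (fun z => exp (-2 * W z)).
{ apply intT2_ge0. by apply cont_den. intro z. apply Rlt_le, exp_pos. }
destruct (Req_dec (intT2 (fun z => exp (-2 * W z))) 0) as [E|E].
- rewrite E /Rdiv Rinv_0 Rmult_0_r. lra.
- apply Rmult_le_pos. exact H1. apply Rlt_le, Rinv_0_lt_compat. lra.
Qed.

Lemma q_lb W a b f : cont2 W -> Cinf_T2 f -> D_form W a b <= Nf W a b f.
Proof.
intros HW Hf. rewrite D_form_eq.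
have Hn : forall r, (fun r => exists f, Cinf_T2 f /\ r = Nf W a b f) r -> 0 <= r.
{ intros r [g [Hg ->]]. by apply Nf_nonneg. }
have Hr : (fun r => exists f, Cinf_T2 f /\ r = Nf W a b f) (Nf W a b f) by exists f.
exact (proj1 (glb_props _ _ Hn Hr)).
Qed.

Lemma q_glb W a b m f0 : cont2 W -> Cinf_T2 f0 ->
  (forall f, Cinf_T2 f -> m <= Nf W a b f) -> m <= D_form W a b.
Proof.
intros HW Hf0 Hm. rewrite D_form_eq.
have Hn : forall r, (fun r => exists f, Cinf_T2 f /\ r = Nf W a b f) r -> 0 <= r.
{ intros r [g [Hg ->]]. by apply Nf_nonneg. }
have Hr : (fun r => exists f, Cinf_T2 f /\ r = Nf W a b f) (Nf W a b f0) by exists f0.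
apply (proj2 (glb_props _ _ Hn Hr)).
intros r [g [Hg ->]]. by apply Hm.
Qed.

Lemma dx_lin f g c1 c2 : smooth2 f -> smooth2 g ->
  dx (fun z => c1 * f z + c2 * g z) = (fun z => c1 * dx f z + c2 * dx g z).
Proof.
intros Hf Hg. apply functional_extensionality. intro z. rewrite /dx.
rewrite (Derive_plus (fun t => c1 * f (t, snd z)) (fun t => c2 * g (t, snd z))).
by rewrite !Derive_scal.
apply: ex_derive_scal; by apply smooth_exdx. apply: ex_derive_scal; by apply smooth_exdx.
Qed.

Lemma dy_lin f g c1 c2 : smooth2 f -> smooth2 g ->
  dy (fun z => c1 * f z + c2 * g z) = (fun z => c1 * dy f z + c2 * dy g z).
Proof.
intros Hf Hg. apply functional_extensionality. intro z. rewrite /dy.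
rewrite (Derive_plus (fun t => c1 * f (fst z, t)) (fun t => c2 * g (fst z, t))).
by rewrite !Derive_scal.
apply: ex_derive_scal; by apply smooth_exdy. apply: ex_derive_scal; by apply smooth_exdy.
Qed.

Lemma Cinf_lin f g c1 c2 : Cinf_T2 f -> Cinf_T2 g -> Cinf_T2 (fun z => c1 * f z + c2 * g z).
Proof.
intros [Sf Pf] [Sg Pg]. split. by apply smooth_lin.
intros x y. by rewrite (proj1 (Pf x y)) (proj2 (Pf x y)) (proj1 (Pg x y)) (proj2 (Pg x y)).
Qed.



Lemma Nf_scale W a b c f : cont2 W -> Cinf_T2 f ->
  Nf W (c * a) (c * b) (fun z => c * f z + 0 * f z) = c ^ 2 * Nf W a b f.
Proof.
intros HW Hf. have Sf := proj1 Hf. rewrite /Nf.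
rewrite (intT2_ext _ (fun z => c ^ 2 * numf W a b f z)).
- rewrite intT2_scal. rewrite /Rdiv. ring. by apply cont_num.
- intro z. rewrite /numf (dx_lin f f c 0 Sf Sf) (dy_lin f f c 0 Sf Sf). ring.
Qed.

Lemma Nf_para W a1 a2 b1 b2 f g : cont2 W -> Cinf_T2 f -> Cinf_T2 g ->
  Nf W (a1 + b1) (a2 + b2) (fun z => 1 * f z + 1 * g z) +
  Nf W (a1 - b1) (a2 - b2) (fun z => 1 * f z + (-1) * g z) =
  2 * Nf W a1 a2 f + 2 * Nf W b1 b2 g.
Proof.
intros HW Hf Hg. have Sf := proj1 Hf. have Sg := proj1 Hg. rewrite /Nf.
set d := intT2 (fun z => exp (-2 * W z)).
have E : forall z, numf W (a1 + b1) (a2 + b2) (fun z => 1 * f z + 1 * g z) z +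
  numf W (a1 - b1) (a2 - b2) (fun z => 1 * f z + (-1) * g z) z =
  2 * numf W a1 a2 f z + 2 * numf W b1 b2 g z.
{ intro z. rewrite /numf (dx_lin f g 1 1 Sf Sg) (dy_lin f g 1 1 Sf Sg).
  rewrite (dx_lin f g 1 (-1) Sf Sg) (dy_lin f g 1 (-1) Sf Sg). ring. }
have C1 := cont_num W (a1 + b1) (a2 + b2) _ HW (Cinf_lin f g 1 1 Hf Hg).
have C2 := cont_num W (a1 - b1) (a2 - b2) _ HW (Cinf_lin f g 1 (-1) Hf Hg).
have C3 := cont_num W a1 a2 f HW Hf.
have C4 := cont_num W b1 b2 g HW Hg.
have E2 := intT2_plus _ _ C1 C2. rewrite (intT2_ext _ _ E) in E2.
rewrite intT2_plus in E2; try (apply cont2_mult; [apply cont2_const|assumption]).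
rewrite !intT2_scal in E2; try assumption.
rewrite /Rdiv -Rmult_plus_distr_r -E2. ring.
Qed.

Section Q.
Variable W : R * R -> R.
Hypothesis HW : cont2 W.
Variable f0 : R * R -> R.
Hypothesis Hf0 : Cinf_T2 f0.

Lemma q_hom_le c a b : c <> 0 -> D_form W (c * a) (c * b) <= c ^ 2 * D_form W a b.
Proof.
intro Hc. have Hc2 : 0 < c ^ 2 by (apply pow2_gt_0).
have : D_form W (c * a) (c * b) / c ^ 2 <= D_form W a b.
{ apply (q_glb W a b _ f0 HW Hf0). intros f Hf.
  have := q_lb W (c * a) (c * b) _ HW (Cinf_lin f f c 0 Hf Hf).
  rewrite Nf_scale //. intro H. apply Rle_div_l. exact Hc2. lra. }
intro H. apply Rle_div_l in H. lra. exact Hc2.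
Qed.

Lemma q_hom c a b : c <> 0 -> D_form W (c * a) (c * b) = c ^ 2 * D_form W a b.
Proof.
intro Hc. apply Rle_antisym. by apply q_hom_le.
have Hc' : / c <> 0 by apply Rinv_neq_0_compat.
have := q_hom_le (/ c) (c * a) (c * b) Hc'.
have -> : / c * (c * a) = a by field.
have -> : / c * (c * b) = b by field.
intro H. have Hc2 : 0 < c ^ 2 by (apply pow2_gt_0).
apply Rle_trans with (c ^ 2 * ((/ c) ^ 2 * D_form W (c * a) (c * b))).
apply Rmult_le_compat_l; lra. right; field; exact Hc.
Qed.

Lemma q_para a1 a2 b1 b2 :
  D_form W (a1 + b1) (a2 + b2) + D_form W (a1 - b1) (a2 - b2) <=
  2 * D_form W a1 a2 + 2 * D_form W b1 b2.
Proof.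
set S := D_form W (a1 + b1) (a2 + b2) + D_form W (a1 - b1) (a2 - b2).
have key : forall f g, Cinf_T2 f -> Cinf_T2 g -> S <= 2 * Nf W a1 a2 f + 2 * Nf W b1 b2 g.
{ intros f g Hf Hg. rewrite -Nf_para //.
  apply Rplus_le_compat; apply q_lb; try assumption; by apply Cinf_lin. }
have step1 : forall g, Cinf_T2 g -> (S - 2 * Nf W b1 b2 g) / 2 <= D_form W a1 a2.
{ intros g Hg. apply (q_glb W a1 a2 _ f0 HW Hf0). intros f Hf.
  have := key f g Hf Hg. lra. }
have step2 : (S - 2 * D_form W a1 a2) / 2 <= D_form W b1 b2.
{ apply (q_glb W b1 b2 _ f0 HW Hf0). intros g Hg. have := step1 g Hg. lra. }
lra.
Qed.

End Q.



Theorem proposition4p4 (U : R * R -> R) :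
  Cinf_T2 U ->
  Qmx U = ((Pmx^T *m Dmx (fun z => - U z)) *m Pmx)%R.
Proof.
intro HU.
have HW : cont2 (fun z => - U z) by apply cont2_opp, smooth_cont, (proj1 HU).
have QDU := QD U HU.
have Hom : forall c a b, c <> 0 -> D_form (fun z => - U z) (c * a) (c * b) = c ^ 2 * D_form (fun z => - U z) a b.
{ intros. by apply (q_hom _ HW U HU). }
have Par := q_para _ HW U HU.
set q := D_form (fun z => - U z) in Hom Par QDU *.
have F1 : q 2 0 = 4 * q 1 0.
{ have := Hom 2 1 0. rewrite Rmult_1_r Rmult_0_r. intro H. rewrite H. ring. lra. }
have F2 : q 0 2 = 4 * q 0 1.
{ have := Hom 2 0 1. rewrite Rmult_1_r Rmult_0_r. intro H. rewrite H. ring. lra. }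
have F4 : q 0 (-2) = 4 * q 0 1.
{ have := Hom (-2) 0 1. rewrite Rmult_1_r Rmult_0_r. intro H. rewrite H. ring. lra. }
have F5 : q 0 (-1) = q 0 1.
{ have := Hom (-1) 0 1. rewrite Rmult_1_r Rmult_0_r. intro H. rewrite H. ring. lra. }
have F7a : q 1 1 + q 1 (-1) <= 2 * q 1 0 + 2 * q 0 1.
{ have := Par 1 0 0 1. by rewrite Rplus_0_l Rplus_0_r Rminus_0_l Rminus_0_r. }
have F7b : q 1 0 + q 0 1 <= 2 * (/ 4 * q 1 1) + 2 * (/ 4 * q 1 (-1)).
{ have := Par (/ 2) (/ 2) (/ 2) (- / 2).
  have -> : / 2 + / 2 = 1 by field.
  have -> : / 2 + - / 2 = 0 by field.
  have -> : / 2 - / 2 = 0 by field.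
  have -> : / 2 - - / 2 = 1 by field.
  have -> : q (/ 2) (/ 2) = / 4 * q 1 1.
  { have := Hom (/ 2) 1 1. rewrite Rmult_1_r. intro H. rewrite H. field.
    apply Rinv_neq_0_compat. lra. }
  have -> : q (/ 2) (- / 2) = / 4 * q 1 (-1).
  { have := Hom (/ 2) 1 (-1). rewrite Rmult_1_r. intro H.
    have E : / 2 * -1 = - / 2 by ring. rewrite E in H. rewrite H. field.
    apply Rinv_neq_0_compat. lra. }
  done. }
have F7 : q 1 1 + q 1 (-1) = 2 * q 1 0 + 2 * q 0 1.
{ have H4 : 2 * (/ 4 * q 1 1) + 2 * (/ 4 * q 1 (-1)) = (q 1 1 + q 1 (-1)) / 2 by field.
  rewrite H4 in F7b. lra. }
clear F7a F7b Hom Par.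
have qeq : forall a b a' b', a = a' -> b = b' -> q a b = q a' b' by intros; subst.
have a1 : q (0+0) (-(1+1)) = 4 * q 0 1 by (apply eq_trans with (q 0 (-2)); [apply qeq; ring| exact F4]).
have a2 : q 0 (-(1)) = q 0 1 by (apply eq_trans with (q 0 (-1)); [apply qeq; ring| exact F5]).
have a3 : q (1+1) (0+0) = 4 * q 1 0 by (apply eq_trans with (q 2 0); [apply qeq; ring| exact F1]).
have a4 : q (0+1) (1+0) = q 1 1 by (apply qeq; ring).
have a5 : q (1+0) (0+1) = q 1 1 by (apply qeq; ring).
have a6 : q (0+0) (1+1) = 4 * q 0 1 by (apply eq_trans with (q 0 2); [apply qeq; ring| exact F2]).
have a7 : q (0+1) (-(1+0)) = q 1 (-1) by (apply qeq; ring).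
have a8 : q 1 (-0) = q 1 0 by (apply qeq; ring).
have a9 : q (1+0) (-(0+1)) = q 1 (-1) by (apply qeq; ring).
have a10 : q (1+1) (-(0+0)) = 4 * q 1 0 by (apply eq_trans with (q 2 0); [apply qeq; ring| exact F1]).
apply/matrixP => i j. rewrite !mxE /Qmx /Dmx /sym_mx_of_form.
rewrite !big_ord_recl !big_ord0 !mxE /=.
rewrite !big_ord_recl !big_ord0 !mxE /=.
case: i => [[|[|i]] Hi] //; case: j => [[|[|j]] Hj] //; rewrite /e1 /e2 /=.
all: rewrite !QDU -/q.
all: repeat match goal with
 | |- context [@Algebra.add ?i ?x ?y] => change (@Algebra.add i x y) with (Rplus x y)
 | |- context [@GRing.mul ?i ?x ?y] => change (@GRing.mul i x y) with (Rmult x y)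
 | |- context [@Algebra.zero ?i] => change (@Algebra.zero i) with R0
 end.
all: lra.
Qed.
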